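(* Let $d\ge1$, $\alpha\ge1$, and $G\in\mathcal{C}^d_\alpha$ (with a fixed representing system of sets). Let $v$ be a maximal vertex of $G$, let $D_i$ be the set of vertices at distance $i$ from $v$ in $G$, and let $(\hat G,w)$ be the weighted graph obtained from $G$ by giving every edge of $G$ weight $1$ and adding, for every pair $x,y$ of vertices lying in a common $D_i$ such that $y$ contains $x$, an edge $xy$ of weight $2$. Then $\mathrm{dist}_G(x,y)=\mathrm{dist}_{(\hat G,w)}(x,y)$ for all $x,y\in V(G)$.
   Context: The height of a bounded convex set $X\subseteq\mathbb{R}^d$ is the infimum of $h\ge0$ such that $X$ lies between two parallel hyperplanes at distance $h$; its aspect ratio is its diameter divided by its height. $\mathcal{C}^d_\alpha$ is the class of connected intersection graphs of systems of path-connected sets in $\mathbb{R}^d$, each obtained from a compact convex set of aspect ratio at most $\alpha$ by removing some subset of its interior (vertices are identified with the sets; adjacent iff they intersect). For a vertex $x$, $\overline{x}$ denotes the convex hull of the set $x$. A vertex $y$ contains a different vertex $x$ if $\overline{x}\subseteq\overline{y}$; a vertex $x$ is maximal if no other vertex contains it. In a weighted graph, the length of a path is the sum of its edge weights and $\mathrm{dist}$ is the infimum of lengths of connecting paths. *)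

(* Defs.v *)
From HB Require Import structures.
From mathcomp Require Import all_boot all_order all_algebra.
From mathcomp Require Import all_classical all_reals all_analysis.
Set Implicit Arguments. Unset Strict Implicit. Unset Printing Implicit Defensive.
Import Order.TTheory GRing.Theory Num.Theory.
Import numFieldNormedType.Exports.
Local Open Scope classical_set_scope.
Local Open Scope ring_scope.

Section Geometry.
Variables (R : realType) (d : nat).
Notation pt := 'rV[R]_d.

Definition dotp (u v : pt) : R := \sum_(i < d) u ord0 i * v ord0 i.
Definition enorm (u : pt) : R := Num.sqrt (dotp u u).

Definition is_convex (A : set pt) : Prop :=
  forall x y (t : R), A x -> A y -> 0 <= t <= 1 -> A (t *: x + (1 - t) *: y).
Definition conv_hull (X : set pt) : set pt :=
  \bigcap_(C in [set C | is_convex C /\ X `<=` C]) C.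

Definition bounded_set (X : set pt) : Prop :=
  exists M : R, forall p, X p -> enorm p <= M.

Definition in_slab (X : set pt) (h : R) : Prop :=
  exists (u : pt) (c : R), enorm u = 1 /\
    forall p, X p -> c <= dotp u p <= c + h.
Definition height (X : set pt) : R := inf [set h | 0 <= h /\ in_slab X h].
Definition diam (X : set pt) : R :=
  sup [set enorm (p - q) | p in X & q in X].

(* aspect ratio diam/height is at most alpha; written multiplicatively *)
Definition aspect_le (X : set pt) (alpha : R) : Prop :=
  diam X <= alpha * height X.

Definition path_connected (A : set pt) : Prop :=
  forall p q, A p -> A q -> exists f : R -> pt,
    [/\ f 0 = p, f 1 = q, {within `[0, 1], continuous f} &
        forall t, 0 <= t <= 1 -> A (f t)].

Definition admissible_set (alpha : R) (S : set pt) : Prop :=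
  exists K : set pt,
    [/\ compact K, is_convex K, aspect_le K alpha &
        (K `\` interior K) `<=` S /\ S `<=` K].

End Geometry.

Section Graphs.
Variable V : Type.

Inductive walk (adj : V -> V -> Prop) : V -> V -> nat -> Prop :=
| walk0 x : walk adj x x 0
| walkS x y z n : adj x y -> walk adj y z n -> walk adj x z n.+1.

Definition is_dist (adj : V -> V -> Prop) (x y : V) (n : nat) : Prop :=
  walk adj x y n /\ forall m, walk adj x y m -> (n <= m)%N.

Definition connected_graph (adj : V -> V -> Prop) : Prop :=
  forall x y, exists n, walk adj x y n.

(* weighted graph: wedge x y w means there is an edge xy of weight w *)
Inductive wwalk (wedge : V -> V -> nat -> Prop) : V -> V -> nat -> Prop :=
| wwalk0 x : wwalk wedge x x 0
| wwalkS x y z w n : wedge x y w -> wwalk wedge y z n -> wwalk wedge x z (w + n).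

Definition is_wdist (wedge : V -> V -> nat -> Prop) (x y : V) (n : nat) : Prop :=
  wwalk wedge x y n /\ forall m, wwalk wedge x y m -> (n <= m)%N.

End Graphs.

Section IntersectionGraph.
Variables (R : realType) (d : nat) (V : Type) (S : V -> set 'rV[R]_d).

Definition igraph (x y : V) : Prop := x <> y /\ S x `&` S y !=set0.

Definition contains (y x : V) : Prop :=
  x <> y /\ conv_hull (S x) `<=` conv_hull (S y).

Definition maximal_vertex (v : V) : Prop := forall y, ~ contains y v.

Definition hat_edge (v : V) (x y : V) (w : nat) : Prop :=
  (igraph x y /\ w = 1%N) \/
  (w = 2%N /\ exists i, is_dist igraph v x i /\ is_dist igraph v y i /\
                          (contains y x \/ contains x y)).

End IntersectionGraph.

(* Main.v *)
Require Import Defs.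
From HB Require Import structures.
From mathcomp Require Import all_boot all_order all_algebra.
From mathcomp Require Import all_classical all_reals all_analysis.
From mathcomp Require Import ring lra zify.
Import Order.TTheory GRing.Theory Num.Theory.
Import numFieldNormedType.Exports.
Local Open Scope classical_set_scope.
Local Open Scope ring_scope.

Section S.
Variables (R : realType) (d : nat).

Lemma hull_convex (X : set 'rV[R]_d) : is_convex (conv_hull X).
Proof. move=> x y t Hx Hy Ht C [cC XC]; exact: (cC x y t (Hx C (conj cC XC)) (Hy C (conj cC XC)) Ht). Qed.

Lemma hull_sub (X : set 'rV[R]_d) : X `<=` conv_hull X.
Proof. by move=> x Xx C [_ XC]; apply: XC. Qed.

Lemma hull_min (X C : set 'rV[R]_d) : is_convex C -> X `<=` C -> conv_hull X `<=` C.
Proof. by move=> cC XC x Hx; apply: Hx. Qed.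

Lemma entry_le (q : 'rV[R]_d) j : `|q ord0 j| <= `|q|.
Proof.
have -> : `|q| = mx_norm q by []. rewrite mx_normrE.
exact: (le_bigmax _ _ (ord0, j)).
Qed.

Lemma fcont (p e : 'rV[R]_d) (c : R) : continuous (fun t : R => p + (t * c) *: e).
Proof.
move=> t; apply: cvgD; first exact: cvg_cst.
apply: cvgZr_tmp; apply: cvgMl; exact: cvg_id.
Qed.
Lemma cross (K : set 'rV[R]_d) (f : R -> 'rV[R]_d) :
  closed K -> {within `[0, 1], continuous f} -> K (f 0) -> ~ K (f 1) ->
  exists t, 0 <= t <= 1 /\ K (f t) /\ ~ K° (f t).
Proof.
move=> cK cf K0 K1; apply: contrapT => H.
have cC := connected_continuous_connected (@segment_connected R 0 1) cf.
have sep : separated K° (~` K).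
  split.
    apply/seteqP; split => // x [/(closureS (@interior_subset _ K))].
    by rewrite -(closure_id K).1.
  rewrite closure_setC; apply/seteqP; split => // x [].
  by move=> a b; apply: b.
have sub : f @` `[0, 1] `<=` K° `|` ~` K.
  move=> _ [t Ht <-]; move: Ht => Ht.
  have [Kt|Kt] := pselect (K (f t)); last by right.
  left; apply: contrapT => nI; apply: H; exists t; split; last by [].
  by move: Ht; rewrite /= in_itv /=.
have [A|A] := connected_subset sep sub cC.
  apply: K1; apply: interior_subset; apply: A; exists 1 => //.
  by rewrite /= in_itv /= lexx ler01.
by apply: (A (f 0)) => //; exists 0 => //; rewrite /= in_itv /= lexx ler01.
Qed.

Lemma line_exit (K : set 'rV[R]_d) p e c : closed K -> K° p -> ~ K (p + c *: e) ->
  exists s, 0 < s <= 1 /\ K (p + (s * c) *: e) /\ ~ K° (p + (s * c) *: e).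
Proof.
move=> cK Kp Kc.
have cf : {within `[0, 1], continuous (fun t : R => p + (t * c) *: e)}.
  exact: continuous_subspaceT (fcont p e c).
have H0 : K (p + (0 * c) *: e).
  by rewrite mul0r scale0r addr0; exact: interior_subset.
have H1 : ~ K (p + (1 * c) *: e) by rewrite mul1r.
have [t [Ht [Kt It]]] := cross K _ cK cf H0 H1.
exists t; split=> //; case/andP: Ht => t0 ->; rewrite andbT lt_neqAle t0 andbT.
by apply/eqP => t0'; apply: It; rewrite -t0' mul0r scale0r addr0.
Qed.

Lemma hull_full (K T : set 'rV[R]_d) : (0 < d)%N -> compact K ->
  (K `\` K°) `<=` T -> K `<=` conv_hull T.
Proof.
move=> d0 cK bT p Kp.
have [Ip|Ip] := pselect (K° p); last by apply: hull_sub; apply: bT.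
have clK : closed K := compact_closed (@norm_hausdorff _ _) cK.
have [M0 M00 HM] := pinfty_ex_gt0 (compact_bounded cK).
pose j : 'I_d := Ordinal d0.
pose e : 'rV[R]_d := delta_mx ord0 j.
have ent c : (p + c *: e) ord0 j = p ord0 j + c.
  by rewrite !mxE !eqxx mulr1.
pose M := M0 + `|p ord0 j| + 1.
have bnd q : K q -> `|q ord0 j| <= M0.
  move=> Kq; apply: le_trans (entry_le q j) _; exact: (HM q Kq).
have E1 : ~ K (p + M *: e).
  move=> /bnd; rewrite ent => h.
  have h1 := ler_norm (p ord0 j + M).
  have h2 : - `|p ord0 j| <= p ord0 j by rewrite lerNl -normrN ler_norm.
  rewrite /M in h h1; lra.
have E2 : ~ K (p + (- M) *: e).
  move=> /bnd; rewrite ent => h.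
  have h1 : - (p ord0 j + - M) <= `|p ord0 j + - M| by rewrite -normrN ler_norm.
  have h2 : p ord0 j <= `|p ord0 j| by rewrite ler_norm.
  rewrite /M in h h1; lra.
have [s1 [/andP[s10 s11] [Ka Ia]]] := line_exit K p e M clK Ip E1.
have [s2 [/andP[s20 s21] [Kb Ib]]] := line_exit K p e (- M) clK Ip E2.
have Ta := bT _ (conj Ka Ia).
have Tb := bT _ (conj Kb Ib).
have M0' : 0 < M by rewrite /M; have := normr_ge0 (p ord0 j); lra.
pose u := s1 * M. pose w := s2 * M.
have u0 : 0 < u by rewrite mulr_gt0.
have w0 : 0 < w by rewrite mulr_gt0.
pose l := w / (u + w).
have l01 : 0 <= l <= 1.
  apply/andP; split; first by rewrite divr_ge0 // ltW // addr_gt0.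
  by rewrite ler_pdivrMr ?addr_gt0 // mul1r lerDr ltW.
have := @hull_convex T _ _ l (hull_sub T _ Ta) (hull_sub T _ Tb) l01.
suff -> : l *: (p + (s1 * M) *: e) + (1 - l) *: (p + (s2 * - M) *: e) = p by [].
rewrite !scalerDr !scalerA addrACA -scalerDl subrKC scale1r -scalerDl.
have -> : l * (s1 * M) + (1 - l) * (s2 * - M) = 0.
  rewrite /l -/u mulrN -/w; field.
  by apply: lt0r_neq0; rewrite addr_gt0.
by rewrite scale0r addr0.
Qed.

Lemma cross_set (K A : set 'rV[R]_d) : closed K -> path_connected A ->
  (exists p, A p /\ K p) -> ~ A `<=` K -> exists q, A q /\ K q /\ ~ K° q.
Proof.
move=> cK pA [p [Ap Kp]] nAK.
have [q [Aq Kq]] : exists q, A q /\ ~ K q.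
  apply: contrapT => H; apply: nAK => q Aq; apply: contrapT => Kq; apply: H.
  by exists q.
have [f [f0 f1 cf fA]] := pA p q Ap Aq.
have H0 : K (f 0) by rewrite f0.
have H1 : ~ K (f 1) by rewrite f1.
have [t [Ht [Kt It]]] := cross K f cK cf H0 H1.
by exists (f t); split => //; apply: fA.
Qed.
End S.

Set Implicit Arguments. Unset Strict Implicit.
Section G.
Variable V : Type.

Lemma walk_cat (adj : V -> V -> Prop) a b c m n :
  walk adj a b m -> walk adj b c n -> walk adj a c (m + n).
Proof.
elim=> {a b m} [x|x y z k xy _ IH] H //.
by rewrite addSn; apply: walkS xy (IH H).
Qed.

Lemma walk_edge (adj : V -> V -> Prop) a b : adj a b -> walk adj a b 1.
Proof. by move=> ab; apply: walkS ab (walk0 _ _). Qed.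

Lemma walk_sym (adj : V -> V -> Prop) a b n :
  (forall x y, adj x y -> adj y x) -> walk adj a b n -> walk adj b a n.
Proof.
move=> sym; elim=> {a b n} [x|x y z k xy _ IH]; first exact: walk0.
by have := walk_cat IH (walk_edge (sym _ _ xy)); rewrite addn1.
Qed.

Lemma walk_0 (adj : V -> V -> Prop) a b : walk adj a b 0 -> a = b.
Proof. by move=> H; inversion H. Qed.

End G.

Lemma igraph_sym (R : realType) (d : nat) (V : Type) (S : V -> set 'rV[R]_d) a b :
  igraph S a b -> igraph S b a.
Proof. by move=> [ne [r [Sa Sb]]]; split; [move=> e; apply: ne | exists r]. Qed.

Lemma walk_cross (R : realType) (d : nat) (V : Type) (S : V -> set 'rV[R]_d)
  (K : set 'rV[R]_d) :
  closed K -> (forall x, path_connected (S x)) ->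
  forall a b m, walk (igraph S) a b m -> ~ S a `<=` K -> S b `<=` K ->
  exists c m', [/\ (m' <= m)%N, walk (igraph S) a c m', walk (igraph S) c b (m - m') &
    exists q, S c q /\ K q /\ ~ K° q].
Proof.
move=> cK pS a b m; elim=> {a b m} [x|x y z k xy wyz IH] nK bK.
  by exfalso; apply: nK.
have [[q [Sxq Kq]]|noK] := pselect (exists q, S x q /\ K q).
  have [r [Sr [Kr Ir]]] := @cross_set _ _ K (S x) cK (pS x) (ex_intro _ q (conj Sxq Kq)) nK.
  exists x, 0%N; split => //; first exact: walk0.
  by rewrite subn0; exact: walkS xy wyz.
  by exists r.
have nKy : ~ S y `<=` K.
  case: xy => _ [r [Sxr Syr]] Hy; apply: noK; exists r; split => //; exact: Hy.
have [c [m' [le w1 w2 Hq]]] := IH nKy bK.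
by exists c, m'.+1; split => //; exact: walkS xy w1.
Qed.

Lemma W2 (R : realType) (d : nat) (alpha : R) (V : Type)
    (S : V -> set 'rV[R]_d) (v x y : V) (i : nat) :
  (1 <= d)%N ->
  (forall x, path_connected (S x) /\ admissible_set alpha (S x)) ->
  maximal_vertex S v -> is_dist (igraph S) v x i -> is_dist (igraph S) v y i ->
  contains S y x -> exists k, (k <= 2)%N /\ walk (igraph S) y x k.
Proof.
move=> d1 hS mv [wx mx] [wy my] [xy hxy].
have pS z : path_connected (S z) := (hS z).1.
have [K [cK cvK _ [bK SK]]] := (hS y).2.
have Khull := @hull_full _ _ K (S y) d1 cK bK.
have hullK : conv_hull (S y) `<=` K := @hull_min _ _ (S y) K cvK SK.
have clK : closed K := compact_closed (@norm_hausdorff _ _) cK.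
have vy : v <> y.
  move=> vy; rewrite -vy in xy my.
  have := my 0%N (walk0 _ v); rewrite leqn0 => /eqP i0; rewrite i0 in wx.
  by apply: xy; rewrite (walk_0 wx).
have nvK : ~ S v `<=` K.
  move=> SvK; apply: (mv y); split => //.
  apply: (@hull_min _ _ (S v) _ (@hull_convex _ _ (S y))) => q Sq.
  by apply: Khull; exact: SvK.
have xK : S x `<=` K.
  by move=> q Sq; apply: hullK; apply: hxy; exact: (@hull_sub _ _ (S x) q Sq).
have [c [m' [le w1 w2 [q [Scq [Kq Iq]]]]]] := walk_cross clK pS wx nvK xK.
have Syq : S y q := bK q (conj Kq Iq).
have [cy|cy] := pselect (c = y).
  rewrite cy in w1 w2; have im := my _ w1.
  by exists (i - m')%N; split => //; lia.
have e : igraph S c y by split => //; exists q.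
have im := my _ (walk_cat w1 (walk_edge e)).
exists (1 + (i - m'))%N; split; first lia.
exact: walk_cat (walk_edge (igraph_sym e)) w2.
Qed.

Lemma hat_walk (R : realType) (d : nat) (alpha : R) (V : Type)
    (S : V -> set 'rV[R]_d) (v : V) :
  (1 <= d)%N ->
  (forall x, path_connected (S x) /\ admissible_set alpha (S x)) ->
  maximal_vertex S v -> forall a b n,
  wwalk (hat_edge S v) a b n -> exists m, (m <= n)%N /\ walk (igraph S) a b m.
Proof.
move=> d1 hS mv a b n; elim=> {a b n} [x | x y z w n hxy _ [m [le wm]]].
  by exists 0%N; split => //; exact: walk0.
case: hxy => [[e ->]|[-> [i [dx [dy [cyx|cxy]]]]]].
- by exists m.+1; split; [lia | exact: walkS e wm].
- have [k [k2 wk]] := W2 d1 hS mv dx dy cyx.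
  exists (k + m)%N; split; first lia.
  exact: walk_cat (walk_sym (@igraph_sym _ _ _ S) wk) wm.
- have [k [k2 wk]] := W2 d1 hS mv dy dx cxy.
  exists (k + m)%N; split; first lia.
  exact: walk_cat wk wm.
Qed.

Lemma walk_wwalk (R : realType) (d : nat) (V : Type)
    (S : V -> set 'rV[R]_d) (v : V) a b n :
  walk (igraph S) a b n -> wwalk (hat_edge S v) a b n.
Proof.
elim=> {a b n} [x|x y z k e _ IH]; first exact: wwalk0.
change k.+1 with (1 + k)%N; apply: wwalkS IH.
by left.
Qed.

Unset Implicit Arguments. Set Strict Implicit.
Theorem lemma5p3 (R : realType) (d : nat) (alpha : R) (V : Type)
    (S : V -> set 'rV[R]_d) (v : V) :
  (1 <= d)%N -> 1 <= alpha ->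
  (forall x, path_connected (S x) /\ admissible_set alpha (S x)) ->
  connected_graph (igraph S) ->
  maximal_vertex S v ->
  forall (x y : V) (n : nat),
    is_dist (igraph S) x y n <-> is_wdist (hat_edge S v) x y n.
Proof.
move=> d1 _ hS _ mv x y n; split.
- move=> [w mw]; split; first exact: walk_wwalk w.
  move=> m wm; have [m' [le w']] := hat_walk d1 hS mv wm.
  exact: leq_trans (mw _ w') le.
- move=> [w mw]; have [m' [le w']] := hat_walk d1 hS mv w.
  have le2 := mw _ (walk_wwalk v w').
  have e : m' = n by apply/eqP; rewrite eqn_leq le le2.
  split; first by rewrite -e.
  by move=> m wm; exact: mw _ (walk_wwalk v wm).
Qed.
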